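(* Let $\{c_n\}_{n\ge1}$ be a real sequence, $\{d_{n+1}\}_{n\ge1}$ a positive chain sequence, and let $P_0(x)=1$, $P_1(x)=x-c_1$, $P_{n+1}(x)=(x-c_{n+1})P_n(x)-d_{n+1}(x^2+1)P_{n-1}(x)$ for $n\ge1$. Let $n\ge2$. If \[ c_1>\sqrt{d_2},\quad c_j>\sqrt{d_j}+\sqrt{d_{j+1}}\ (j=2,\dots,n-1),\quad c_n>\sqrt{d_n}, \] then all zeros of $P_n$ are positive. If \[ c_1<-\sqrt{d_2},\quad c_j<-\sqrt{d_j}-\sqrt{d_{j+1}}\ (j=2,\dots,n-1),\quad c_n<-\sqrt{d_n}, \] then all zeros of $P_n$ are negative.
   Context: A sequence $\{d_{n+1}\}_{n\ge1}$ is a positive chain sequence if there is a sequence $\{g_{n+1}\}_{n\ge0}$ with $0\le g_1<1$, $0<g_n<1$ for $n\ge2$, and $d_{n+1}=(1-g_n)g_{n+1}$ for $n\ge1$. *)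

(* Defs.v *)
From HB Require Import structures.
From mathcomp Require Import all_boot all_order all_algebra.
From mathcomp Require Export complex.
Set Implicit Arguments. Unset Strict Implicit. Unset Printing Implicit Defensive.
Import Order.TTheory GRing.Theory Num.Theory.
Local Open Scope ring_scope.

Definition positive_chain_sequence (R : realFieldType) (d : nat -> R) : Prop :=
  exists g : nat -> R,
    [/\ 0 <= g 1%N, g 1%N < 1,
        (forall n, (2 <= n)%N -> 0 < g n /\ g n < 1)
      & (forall n, (1 <= n)%N -> d n.+1 = (1 - g n) * g n.+1)].

Fixpoint Ppair (R : ringType) (c d : nat -> R) (n : nat) : {poly R} * {poly R} :=
  match n with
  | 0 => (1, 0)
  | 1 => ('X - (c 1%N)%:P, 1)
  | m.+1 => let (p, q) := Ppair c d m in
            (('X - (c m.+1)%:P) * p - (d m.+1)%:P * ('X ^+ 2 + 1) * q, p)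
  end.

Definition P (R : ringType) (c d : nat -> R) (n : nat) : {poly R} := (Ppair c d n).1.

(* Main.v *)
Require Import Defs.
From HB Require Import structures.
From mathcomp Require Import all_boot all_order all_algebra.
From mathcomp Require Import complex.
From mathcomp Require Import ring lra.
Import Order.TTheory GRing.Theory Num.Theory.
Local Open Scope ring_scope.
Local Open Scope complex_scope.

Section C.
Variable R : rcfType.
Implicit Types u v : R[i].
Local Notation CRe := (@complex.Re _).
Local Notation CIm := (@complex.Im _).
Lemma CReM u v : CRe (u * v) = CRe u * CRe v - CIm u * CIm v.
Proof. by case: u => a b; case: v => c e. Qed.
Lemma CImM u v : CIm (u * v) = CRe u * CIm v + CIm u * CRe v.
Proof. by case: u => a b; case: v => c e. Qed.
Lemma CReD u v : CRe (u + v) = CRe u + CRe v.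
Proof. by case: u => a b; case: v => c e. Qed.
Lemma CImD u v : CIm (u + v) = CIm u + CIm v.
Proof. by case: u => a b; case: v => c e. Qed.
Lemma CReB u v : CRe (u - v) = CRe u - CRe v.
Proof. by case: u => a b; case: v => c e. Qed.
Lemma CImB u v : CIm (u - v) = CIm u - CIm v.
Proof. by case: u => a b; case: v => c e. Qed.
Lemma CReN u : CRe (- u) = - CRe u.
Proof. by case: u => a b. Qed.
Lemma CImN u : CIm (- u) = - CIm u.
Proof. by case: u => a b. Qed.
Lemma CReC (a : R) : CRe (a%:C) = a. Proof. by []. Qed.
Lemma CImC (a : R) : CIm (a%:C) = 0. Proof. by []. Qed.
Lemma CRe1 : CRe (1 : R[i]) = 1. Proof. by []. Qed.
Lemma CIm1 : CIm (1 : R[i]) = 0. Proof. by []. Qed.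
Lemma CRe0 : CRe (0 : R[i]) = 0. Proof. by []. Qed.
Lemma CIm0 : CIm (0 : R[i]) = 0. Proof. by []. Qed.
End C.

Lemma PpairS (R : ringType) (c d : nat -> R) m : Ppair c d m.+2 =
  (('X - (c m.+2)%:P) * (Ppair c d m.+1).1 - (d m.+2)%:P * ('X ^+ 2 + 1) * (Ppair c d m.+1).2,
   (Ppair c d m.+1).1).
Proof.
transitivity (let (p, q) := Ppair c d m.+1 in
  (('X - (c m.+2)%:P) * p - (d m.+2)%:P * ('X ^+ 2 + 1) * q, p)); first by [].
by case: (Ppair c d m.+1).
Qed.

Lemma Ppair2 (R : ringType) (c d : nat -> R) m : (Ppair c d m.+1).2 = P c d m.
Proof. by case: m => [//|m]; rewrite PpairS. Qed.

Lemma P_rec (R : ringType) (c d : nat -> R) m :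
  P c d m.+2 = ('X - (c m.+2)%:P) * P c d m.+1 - (d m.+2)%:P * ('X ^+ 2 + 1) * P c d m.
Proof. by rewrite {1}/P PpairS /= Ppair2. Qed.

Section Eval.
Variable R : rcfType.
Variables (c d : nat -> R) (z : R[i]).
Definition ev k := (map_poly (fun a : R => a%:C) (P c d k)).[z].
Lemma ev_map k : map_poly (fun a : R => a%:C) (P c d k) = map_poly (real_complex R) (P c d k).
Proof. by []. Qed.
Lemma ev0 : ev 0 = 1.
Proof. by rewrite /ev ev_map /P /= rmorph1 hornerC. Qed.
Lemma ev1 : ev 1 = z - (c 1)%:C.
Proof. by rewrite /ev ev_map /P /= rmorphB /= map_polyX map_polyC !hornerE. Qed.
Lemma evS m : ev m.+2 = (z - (c m.+2)%:C) * ev m.+1 - (d m.+2)%:C * (z ^+ 2 + 1) * ev m.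
Proof.
rewrite /ev !ev_map P_rec !(rmorphB, rmorphM, rmorphD, rmorphXn, rmorph1) /=.
by rewrite map_polyX !map_polyC !hornerE.
Qed.
End Eval.

Lemma alg_key (R : realFieldType) (A B N M s p q : R) :
  0 < N -> s ^+ 2 <= N ^+ 2 -> s ^+ 2 < M ^+ 2 ->
  A * N - M = p * s -> B * N = q * s ->
  p ^+ 2 - q ^+ 2 = A ^+ 2 - B ^+ 2 + 1 -> p * q = A * B ->
  B = 0 /\ 0 < A * M.
Proof.
move=> N0 sN sM e1 e2 e3 e4.
have h1 : B * (A * (N ^+ 2 - s ^+ 2) - M * N) = 0.
  have : (B * N) * (A * N - M) = (p * q) * s ^+ 2 by rewrite e1 e2; ring.
  rewrite e4 => h; apply/eqP; rewrite -subr_eq0.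
  have -> : B * (A * (N ^+ 2 - s ^+ 2) - M * N) - 0 = (B * N) * (A * N - M) - A * B * s ^+ 2 by ring.
  by rewrite h subrr.
have h2 : A ^+ 2 * (N ^+ 2 - s ^+ 2) - 2 * A * M * N + M ^+ 2 - s ^+ 2 = B ^+ 2 * (N ^+ 2 - s ^+ 2).
  have : (A * N - M) ^+ 2 - (B * N) ^+ 2 = (p ^+ 2 - q ^+ 2) * s ^+ 2 by rewrite e1 e2; ring.
  rewrite e3 => h.
  have hh : A ^+ 2 * (N ^+ 2 - s ^+ 2) - 2 * A * M * N + M ^+ 2 - s ^+ 2 - B ^+ 2 * (N ^+ 2 - s ^+ 2)
     = ((A * N - M) ^+ 2 - (B * N) ^+ 2) - (A ^+ 2 - B ^+ 2 + 1) * s ^+ 2 by ring.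
  by apply/eqP; rewrite -subr_eq0 hh h subrr.
have M2 : 0 < M ^+ 2 by apply: le_lt_trans sM; exact: sqr_ge0.
have [B0|Bn0] := eqVneq B 0.
  split => //; move: h2; rewrite B0 => h2.
  rewrite ltNge; apply/negP => AM.
  have : 0 < A ^+ 2 * (N ^+ 2 - s ^+ 2) - 2 * A * M * N + M ^+ 2 - s ^+ 2.
    have : 0 <= A ^+ 2 * (N ^+ 2 - s ^+ 2) by apply: mulr_ge0; [exact: sqr_ge0| lra].
    have : 0 <= - (2 * A * M * N) by rewrite -!mulrA mulrA -mulrN; nra.
    lra.
  rewrite h2; lra.
exfalso.
have hA : A * (N ^+ 2 - s ^+ 2) = M * N.
  by apply/eqP; rewrite -subr_eq0; move/eqP: h1; rewrite mulf_eq0 (negPf Bn0).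
set D := N ^+ 2 - s ^+ 2 in hA h2.
have D0 : 0 < D.
  rewrite lt_def /D subr_ge0 sN andbT; apply/eqP => D0.
  move: hA; rewrite /D D0 mulr0 => /esym/eqP; rewrite mulf_eq0 => /orP [/eqP M0|/eqP N00].
    by move: M2; rewrite M0 expr0n ltxx.
  by move: N0; rewrite N00 ltxx.
have h3 : - (s ^+ 2 * (M ^+ 2 + D)) = B ^+ 2 * D ^+ 2.
  have : (A ^+ 2 * D - 2 * A * M * N + M ^+ 2 - s ^+ 2) * D = B ^+ 2 * D * D by rewrite h2.
  have -> : (A ^+ 2 * D - 2 * A * M * N + M ^+ 2 - s ^+ 2) * D =
     (A * D) ^+ 2 - 2 * (A * D) * M * N + (M ^+ 2 - s ^+ 2) * D by ring.
  rewrite hA /D => h; apply/eqP; rewrite -subr_eq0.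
  have -> : - (s ^+ 2 * (M ^+ 2 + (N ^+ 2 - s ^+ 2))) - B ^+ 2 * (N ^+ 2 - s ^+ 2) ^+ 2 =
    ((M * N) ^+ 2 - 2 * (M * N) * M * N + (M ^+ 2 - s ^+ 2) * (N ^+ 2 - s ^+ 2)) -
    B ^+ 2 * (N ^+ 2 - s ^+ 2) * (N ^+ 2 - s ^+ 2) by ring.
  by rewrite h subrr.
have : 0 < B ^+ 2 * D ^+ 2 by apply: mulr_gt0; [rewrite lt_def sqr_ge0 sqrf_eq0 Bn0 // | exact: exprn_gt0].
rewrite -h3 oppr_gt0 ltNge => /negP; apply.
by apply: mulr_ge0; [exact: sqr_ge0|]; apply: addr_ge0; [exact: sqr_ge0| exact: ltW].
Qed.

Lemma amgm (R : realFieldType) (a al be x y x' y' : R) :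
  0 <= a -> 0 <= al -> 0 <= be -> a ^+ 2 <= al * be ->
  2 * a * (x * x' + y * y') <= al * (x ^+ 2 + y ^+ 2) + be * (x' ^+ 2 + y' ^+ 2).
Proof.
move=> a0 al0 be0 h.
have [al00|aln0] := eqVneq al 0.
  rewrite al00 mul0r in h *.
  have a00 : a = 0.
    by apply/eqP; rewrite -sqrf_eq0 eq_le sqr_ge0 andbT h.
  rewrite a00 mulr0 !mul0r add0r; apply: mulr_ge0 => //; apply: addr_ge0; exact: sqr_ge0.
have alp : 0 < al by rewrite lt_def aln0.
rewrite -subr_ge0 -(pmulr_rge0 _ alp).
have -> : al * (al * (x ^+ 2 + y ^+ 2) + be * (x' ^+ 2 + y' ^+ 2) - 2 * a * (x * x' + y * y'))
  = (al * x - a * x') ^+ 2 + (al * y - a * y') ^+ 2 + (al * be - a ^+ 2) * (x' ^+ 2 + y' ^+ 2) by ring.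
apply: addr_ge0; first by apply: addr_ge0; exact: sqr_ge0.
apply: mulr_ge0; first by rewrite subr_ge0.
apply: addr_ge0; exact: sqr_ge0.
Qed.

Lemma tele_bound (R : realFieldType) (G r al be : nat -> R) n :
  (forall k, 2 * G k <= al k * r k + be k.+1 * r k.+1) ->
  \sum_(0 <= k < n) (G k.+1 + G k) <=
  \sum_(0 <= k < n) (al k.+1 + be k.+1) * r k.+1
   + (be n.+1 * r n.+1 - al n * r n) / 2 - (be 1%N * r 1%N - al 0%N * r 0%N) / 2.
Proof.
move=> hG.
set H := fun k => (be k.+1 * r k.+1 - al k * r k) / 2.
rewrite -/(H n) -/(H 0%N) -addrA -(telescope_sumr H (leq0n n)) -big_split /=.
apply: ler_sum => k _.
have h1 := hG k; have h2 := hG k.+1.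
rewrite /H; lra.
Qed.

Local Notation CRe := (@complex.Re _).
Local Notation CIm := (@complex.Im _).

Lemma Cneq0 (R : rcfType) (x : R) : x != 0 -> x%:C != 0.
Proof. move=> h; apply/eqP => /(congr1 (@complex.Re _)) /= h0; by rewrite h0 eqxx in h. Qed.

Lemma ring_eq_of2 (R : comRingType) (u v u' v' U V : R) (al be : R) :
  u = v -> u' = v' -> U - V = al * (u - v) + be * (u' - v') -> U = V.
Proof. by move=> -> -> h; apply/eqP; rewrite -subr_eq0 h !subrr !mulr0 addr0. Qed.

Lemma comp_gen (R : rcfType) (z s u0 u1 u2 : R[i]) (cc a1 a2 : R) :
  (z - cc%:C) * u1 = s * (a2%:C * u2 + a1%:C * u0) ->
  (CRe z - cc) * (CRe u1 ^+ 2 + CIm u1 ^+ 2) =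
    CRe s * (a2 * (CRe u1 * CRe u2 + CIm u1 * CIm u2) + a1 * (CRe u0 * CRe u1 + CIm u0 * CIm u1))
    - CIm s * (a2 * (CRe u1 * CIm u2 - CIm u1 * CRe u2) - a1 * (CRe u0 * CIm u1 - CIm u0 * CRe u1)) /\
  CIm z * (CRe u1 ^+ 2 + CIm u1 ^+ 2) =
    CIm s * (a2 * (CRe u1 * CRe u2 + CIm u1 * CIm u2) + a1 * (CRe u0 * CRe u1 + CIm u0 * CIm u1))
    + CRe s * (a2 * (CRe u1 * CIm u2 - CIm u1 * CRe u2) - a1 * (CRe u0 * CIm u1 - CIm u0 * CRe u1)).
Proof.
move=> E.
have e1 := congr1 (@complex.Re _) E; have e2 := congr1 (@complex.Im _) E.
rewrite !(CReM, CImM, CReD, CImD, CReB, CImB, CReN, CImN, CReC, CImC) in e1 e2.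
split.
  apply: (@ring_eq_of2 _ _ _ _ _ _ _ (CRe u1) (CIm u1) e1 e2); ring.
apply: (@ring_eq_of2 _ _ _ _ _ _ _ (- CIm u1) (CRe u1) e1 e2); ring.
Qed.

Section Main.
Variable R : rcfType.
Variables (c d g : nat -> R) (n : nat) (z : R[i]).
Hypothesis n2 : (2 <= n)%N.
Hypothesis g10 : 0 <= g 1%N.
Hypothesis g11 : g 1%N < 1.
Hypothesis g2 : forall k, (2 <= k)%N -> 0 < g k /\ g k < 1.
Hypothesis dg : forall k, (1 <= k)%N -> d k.+1 = (1 - g k) * g k.+1.

Definition a j := if (2 <= j <= n)%N then Num.sqrt (d j) else 0.

Lemma a_ge0 j : 0 <= a j.
Proof. by rewrite /a; case: ifP => // _; exact: sqrtr_ge0. Qed.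
Lemma a1 : a 1%N = 0. Proof. by []. Qed.
Lemma an1 : a n.+1 = 0. Proof. by rewrite /a ltnn andbF. Qed.

Lemma g_lt1 k : (1 <= k)%N -> 0 < 1 - g k.
Proof.
case: k => // [[|k]] _; first by rewrite subr_gt0.
by rewrite subr_gt0; case: (@g2 k.+2 isT).
Qed.

Lemma d_pos j : (2 <= j)%N -> 0 < d j.
Proof.
case: j => // k hk; rewrite dg //; apply: mulr_gt0; first exact: g_lt1.
by case: (@g2 _ hk).
Qed.

Lemma a_sq j : (2 <= j <= n)%N -> a j ^+ 2 = d j.
Proof. by move=> h; rewrite /a h sqr_sqrtr // ltW // d_pos //; case/andP: h. Qed.

Lemma a_pos j : (2 <= j <= n)%N -> 0 < a j.
Proof. by move=> h; rewrite /a h sqrtr_gt0 d_pos //; case/andP: h. Qed.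

Fixpoint pi k := match k with 0 => 1 | k'.+1 => pi k' * a k'.+2 end.

Lemma pi_neq0 k : (k < n)%N -> pi k != 0.
Proof.
elim: k => [|k IH] h /=; first exact: oner_neq0.
rewrite mulf_neq0 ?IH ?(ltnW h) //; apply: lt0r_neq0; apply: a_pos.
by rewrite h.
Qed.

Definition sg := sqrtc (z ^+ 2 + 1).

Definition w k := match k with 0 => 0 | k'.+1 => ev R c d z k' / (sg ^+ k' * (pi k')%:C) end.

Hypothesis root : ev R c d z n = 0.
Hypothesis sg0 : sg != 0.

Lemma aC_neq0 j : (2 <= j <= n)%N -> (a j)%:C != 0.
Proof. by move=> h; apply: Cneq0; apply: lt0r_neq0; exact: a_pos. Qed.

Lemma dC j : (2 <= j <= n)%N -> (d j)%:C = (a j)%:C ^+ 2.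
Proof. by move=> h; rewrite -rmorphXn a_sq. Qed.

Lemma wE k : (k < n)%N ->
  (z - (c k.+1)%:C) * w k.+1 = sg * ((a k.+2)%:C * w k.+2 + (a k.+1)%:C * w k).
Proof.
have sq : sg ^+ 2 = z ^+ 2 + 1 := sqr_sqrtc _.
case: k => [|m] hk.
  have h2 : (2 <= 2 <= n)%N by rewrite n2.
  have := aC_neq0 _ h2.
  rewrite /w /= ev0 ev1 a1 mul1r rmorph1 rmorph0 => hA.
  by field; rewrite sg0 andbT.
have h2 : (2 <= m.+2 <= n)%N by apply/andP; split.
have hA2 := aC_neq0 _ h2.
have hP : (pi m)%:C != 0 by apply: Cneq0; apply: pi_neq0; rewrite ltnW // ltnW.
have hS : sg ^+ m != 0 by rewrite expf_neq0.
rewrite /w /= !rmorphM /= !exprS.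
have [hn|hn] := ltnP m.+2 n.
  have h3 : (2 <= m.+3 <= n)%N by rewrite /= hn.
  have hA3 := aC_neq0 _ h3.
  rewrite evS (dC _ h2) -sq.
  by field; apply/and5P; split.
have en : n = m.+2 by apply/eqP; rewrite eqn_leq hn hk.
have -> : a m.+3 = 0 by rewrite -en an1.
have E : (z - (c m.+2)%:C) * ev R c d z m.+1 = (d m.+2)%:C * (z ^+ 2 + 1) * ev R c d z m.
  by apply/eqP; rewrite -subr_eq0 -evS -en root.
rewrite rmorph0 mul0r add0r [(z - _) * _]mulrA E (dC _ h2) -sq.
by field; apply/and4P; split.
Qed.

Definition x k := CRe (w k).
Definition y k := CIm (w k).
Definition r k := x k ^+ 2 + y k ^+ 2.
Definition G k := a k.+1 * (x k * x k.+1 + y k * y k.+1).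
Definition F k := a k.+1 * (x k * y k.+1 - y k * x k.+1).

Lemma comp k : (k < n)%N ->
  (CRe z - c k.+1) * r k.+1 = CRe sg * (G k.+1 + G k) - CIm sg * (F k.+1 - F k) /\
  CIm z * r k.+1 = CIm sg * (G k.+1 + G k) + CRe sg * (F k.+1 - F k).
Proof.
move=> hk; have := wE _ hk.
rewrite /r /G /F /x /y.
move: (w k) (w k.+1) (w k.+2) => u0 u1 u2.
exact: comp_gen.
Qed.

Definition NN := \sum_(0 <= k < n) r k.+1.
Definition MM := \sum_(0 <= k < n) c k.+1 * r k.+1.
Definition ss := \sum_(0 <= k < n) (G k.+1 + G k).

Lemma sumF : \sum_(0 <= k < n) (F k.+1 - F k) = 0.
Proof. by rewrite telescope_sumr // /F an1 a1 !mul0r subrr. Qed.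

Lemma eqRe : CRe z * NN - MM = CRe sg * ss.
Proof.
have -> : CRe z * NN - MM = \sum_(0 <= k < n) ((CRe z - c k.+1) * r k.+1).
  by rewrite /NN /MM mulr_sumr -sumrB; apply: eq_bigr => k _; ring.
rewrite big_nat (eq_bigr (fun k => CRe sg * (G k.+1 + G k) - CIm sg * (F k.+1 - F k))); last first.
  by move=> k /andP [_ hk]; case: (comp _ hk).
by rewrite -big_nat sumrB -!mulr_sumr sumF mulr0 subr0.
Qed.

Lemma eqIm : CIm z * NN = CIm sg * ss.
Proof.
rewrite /NN mulr_sumr big_nat (eq_bigr (fun k => CIm sg * (G k.+1 + G k) + CRe sg * (F k.+1 - F k))); last first.
  by move=> k /andP [_ hk]; case: (comp _ hk).
by rewrite -big_nat big_split /= -!mulr_sumr sumF mulr0 addr0.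
Qed.

Lemma w1 : w 1%N = 1.
Proof. by rewrite /w ev0 expr0 mul1r /= rmorph1 mul1r invr1. Qed.
Lemma r1 : r 1%N = 1.
Proof. by rewrite /r /x /y w1 CRe1 CIm1; rewrite expr1n expr0n addr0. Qed.
Lemma wn1 : w n.+1 = 0.
Proof. by rewrite /w root mul0r. Qed.
Lemma rn1 : r n.+1 = 0.
Proof. by rewrite /r /x /y wn1 CRe0 CIm0 expr0n addr0. Qed.
Lemma r_ge0 k : 0 <= r k.
Proof. by rewrite /r addr_ge0 ?sqr_ge0. Qed.

Lemma NN_gt0 : 0 < NN.
Proof.
rewrite /NN big_ltn ?(ltnW n2) // r1.
apply: (lt_le_trans ltr01); rewrite lerDl; apply: sumr_ge0 => k _; exact: r_ge0.
Qed.


Lemma g_ge0 k : (1 <= k)%N -> 0 <= g k.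
Proof.
case: k => // [[|k]] _ //; by case: (@g2 k.+2 isT) => /ltW.
Qed.

Lemma G_bound (al be : nat -> R) k :
  0 <= al k -> 0 <= be k.+1 -> a k.+1 ^+ 2 <= al k * be k.+1 ->
  2 * G k <= al k * r k + be k.+1 * r k.+1 /\ 2 * (- G k) <= al k * r k + be k.+1 * r k.+1.
Proof.
move=> h1 h2 h3; rewrite /G /r; split; first by rewrite mulrA; apply: amgm => //; exact: a_ge0.
have := @amgm _ (a k.+1) (al k) (be k.+1) (x k) (y k) (- x k.+1) (- y k.+1) (a_ge0 _) h1 h2 h3.
rewrite !sqrrN; apply: le_trans; rewrite le_eqVlt; apply/orP; left; apply/eqP; ring.
Qed.

Definition alN k := if k == 0%N then 0 else 1 - g k.

Lemma N_cond k : 0 <= alN k /\ 0 <= g k.+1 /\ a k.+1 ^+ 2 <= alN k * g k.+1.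
Proof.
have gk1 : 0 <= g k.+1 by apply: g_ge0.
case: k gk1 => [|k] gk1.
  by rewrite /alN /= a1 expr0n mul0r; split.
have al0 : 0 <= alN k.+1 by rewrite /alN /=; apply: ltW; exact: g_lt1.
split => //; split => //.
rewrite /a; case: ifP => h; last by rewrite expr0n mulr_ge0.
rewrite sqr_sqrtr; last by apply: ltW; apply: d_pos.
by rewrite dg // /alN /=.
Qed.

Lemma s_le_N : ss <= NN /\ - ss <= NN.
Proof.
have H0 : (g 1%N * r 1%N - alN 0 * r 0%N) / 2 >= 0.
  by rewrite /alN /= mul0r subr0 divr_ge0 // mulr_ge0 // r_ge0.
have Hn : (g n.+1 * r n.+1 - alN n * r n) / 2 <= 0.
  rewrite rn1 mulr0 sub0r mulNr oppr_le0 divr_ge0 // mulr_ge0 ?r_ge0 //.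
  by case: (N_cond n).
have coef : \sum_(0 <= k < n) (alN k.+1 + g k.+1) * r k.+1 = NN.
  by apply: eq_bigr => k _; rewrite /alN /= subrK mul1r.
split.
  have := @tele_bound _ G r alN g n.
  rewrite coef; move=> /(_ _) h.
  have := h (fun k => proj1 (@G_bound alN g k (N_cond k).1 (N_cond k).2.1 (N_cond k).2.2)).
  rewrite /ss; lra.
have := @tele_bound _ (fun k => - G k) r alN g n.
rewrite coef; move=> /(_ _) h.
have := h (fun k => proj2 (@G_bound alN g k (N_cond k).1 (N_cond k).2.1 (N_cond k).2.2)).
move=> hh; rewrite /ss -sumrN; under eq_bigr => k _ do rewrite opprD.
lra.
Qed.

Variable eps : R.
Hypothesis hc : forall k, (k < n)%N -> a k.+1 + a k.+2 < eps * c k.+1.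

Lemma KK_lt : \sum_(0 <= k < n) (a k.+1 + a k.+2) * r k.+1 < eps * MM.
Proof.
rewrite -subr_gt0 /MM mulr_sumr -sumrB.
rewrite big_ltn ?(ltnW n2) // r1.
apply: (lt_le_trans (y := (eps * c 1%N - (a 1%N + a 2%N)))).
  by rewrite subr_gt0 hc // (ltnW n2).
rewrite !mulr1 lerDl big_nat; apply: sumr_ge0 => k /andP [_ hk].
rewrite mulrA -mulrBl; apply: mulr_ge0; last exact: r_ge0.
by rewrite subr_ge0 ltW // hc.
Qed.

Lemma s_lt_M : ss < eps * MM /\ - ss < eps * MM.
Proof.
have hB k : 0 <= a k.+1 /\ 0 <= a k.+1 /\ a k.+1 ^+ 2 <= a k.+1 * a k.+1.
  by rewrite expr2 lexx; split; [exact: a_ge0|split; [exact: a_ge0|]].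
have coef : \sum_(0 <= k < n) (a k.+2 + a k.+1) * r k.+1 = \sum_(0 <= k < n) (a k.+1 + a k.+2) * r k.+1.
  by apply: eq_bigr => k _; rewrite addrC.
have KL := KK_lt.
split.
  have := @tele_bound _ G r (fun k => a k.+1) a n.
  rewrite coef an1 a1 !mul0r subrr !mul0r subr0 addr0; move=> /(_ _) h.
  have := h (fun k => proj1 (@G_bound (fun k => a k.+1) a k (hB k).1 (hB k).2.1 (hB k).2.2)).
  rewrite /ss; lra.
have := @tele_bound _ (fun k => - G k) r (fun k => a k.+1) a n.
rewrite coef an1 a1 !mul0r subrr !mul0r subr0 addr0; move=> /(_ _) h.
have := h (fun k => proj2 (@G_bound (fun k => a k.+1) a k (hB k).1 (hB k).2.1 (hB k).2.2)).
move=> hh; rewrite /ss -sumrN; under eq_bigr => k _ do rewrite opprD.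
lra.
Qed.

Lemma core : eps * eps = 1 -> CIm z = 0 /\ 0 < eps * CRe z.
Proof.
move=> e2.
have sq := sqr_sqrtc (z ^+ 2 + 1); rewrite -/sg !expr2 in sq.
have q1 := congr1 (@complex.Re _) sq; have q2 := congr1 (@complex.Im _) sq.
rewrite !(CReM, CImM, CReD, CImD, CRe1, CIm1) in q1 q2.
have [sN1 sN2] := s_le_N; have [sM1 sM2] := s_lt_M.
have KK0 : 0 <= \sum_(0 <= k < n) (a k.+1 + a k.+2) * r k.+1.
  by apply: sumr_ge0 => k _; apply: mulr_ge0; [apply: addr_ge0; exact: a_ge0| exact: r_ge0].
have eM : 0 < eps * MM by apply: le_lt_trans KK0 KK_lt.
have Npos := NN_gt0.
have hsN : ss ^+ 2 <= NN ^+ 2.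
  rewrite -subr_ge0; have -> : NN ^+ 2 - ss ^+ 2 = (NN - ss) * (NN + ss) by ring.
  by apply: mulr_ge0; lra.
have hsM : ss ^+ 2 < MM ^+ 2.
  rewrite -subr_gt0; have -> : MM ^+ 2 - ss ^+ 2 = (eps * MM - ss) * (eps * MM + ss).
    by rewrite -[MM ^+ 2]mul1r -e2; ring.
  by apply: mulr_gt0; lra.
have h3 : CRe sg ^+ 2 - CIm sg ^+ 2 = CRe z ^+ 2 - CIm z ^+ 2 + 1 by rewrite !expr2; lra.
have h4 : CRe sg * CIm sg = CRe z * CIm z by lra.
have [B0 AM] := @alg_key _ (CRe z) (CIm z) NN MM ss (CRe sg) (CIm sg) Npos hsN hsM eqRe eqIm h3 h4.
split => //.
have em2 : 0 < (eps * MM) ^+ 2 by rewrite exprn_gt0.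
rewrite -(pmulr_lgt0 _ em2).
have -> : eps * CRe z * (eps * MM) ^+ 2 = (CRe z * MM) * (eps * MM) * (eps * eps) by ring.
by rewrite e2 mulr1 mulr_gt0.
Qed.

End Main.

Lemma zc_neq0 (R : rcfType) (z : R[i]) (t : R) : z ^+ 2 + 1 = 0 -> z - t%:C != 0.
Proof.
move=> hz; apply/eqP => h.
have hR := congr1 (@complex.Re _) h; have hI := congr1 (@complex.Im _) h.
have q := congr1 (@complex.Re _) hz.
rewrite expr2 !(CReM, CImM, CReD, CImD, CReB, CImB, CReN, CImN, CReC, CImC, CRe1, CRe0, CIm0) in hR hI q.
clear h hz.
nra.
Qed.

Lemma ev_neq0 (R : rcfType) (c d : nat -> R) (z : R[i]) : z ^+ 2 + 1 = 0 ->
  forall k, ev R c d z k != 0.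
Proof.
move=> hz.
suff H : forall k, ev R c d z k != 0 /\ ev R c d z k.+1 != 0 by move=> k; case: (H k).
elim=> [|k [_ IH]].
  by rewrite ev0 ev1 oner_neq0 zc_neq0.
split => //; rewrite evS hz mulr0 mul0r subr0 mulf_neq0 // zc_neq0 //.
Qed.


Lemma ReCE (R : rcfType) (z : R[i]) : Re z = (complex.Re z)%:C.
Proof. by rewrite ReE ReJ_add. Qed.
Lemma ImCE (R : rcfType) (z : R[i]) : Im z = (complex.Im z)%:C.
Proof.
rewrite ImE ImJ_sub mulrC mulrA.
by rewrite [RHS]mulrC [RHS]mulrA [_ * 2^-1]mulrC mulrA.
Qed.

Lemma a_in (R : rcfType) (d : nat -> R) n j : (2 <= j <= n)%N -> a R d n j = Num.sqrt (d j).
Proof. by rewrite /a => ->. Qed.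

Lemma hc_of (R : rcfType) (c d : nat -> R) n (eps : R) : (2 <= n)%N ->
  Num.sqrt (d 2%N) < eps * c 1%N ->
  (forall j, (2 <= j <= n.-1)%N -> Num.sqrt (d j) + Num.sqrt (d j.+1) < eps * c j) ->
  Num.sqrt (d n) < eps * c n ->
  forall k, (k < n)%N -> a R d n k.+1 + a R d n k.+2 < eps * c k.+1.
Proof.
move=> n2 h1 hm hn [|k] hk.
  by rewrite a1 add0r a_in // n2.
have [e|ne] := eqVneq k.+2 n.
  by rewrite -e an1 addr0 a_in ?e ?leqnn // -e.
have hk2 : (k.+2 < n)%N by rewrite ltn_neqAle ne hk.
rewrite !a_in; last (by apply/andP; split => //; exact: ltnW); last by apply/andP.
apply: hm; apply/andP; split => //.
by case: n n2 hk hk2 {h1 hn ne} => // n _ _ hk2; rewrite -ltnS.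
Qed.

Lemma main_eps (R : rcfType) (c d : nat -> R) (n : nat) (eps : R) (z : R[i]) :
  positive_chain_sequence d -> (2 <= n)%N -> eps * eps = 1 ->
  Num.sqrt (d 2%N) < eps * c 1%N ->
  (forall j, (2 <= j <= n.-1)%N -> Num.sqrt (d j) + Num.sqrt (d j.+1) < eps * c j) ->
  Num.sqrt (d n) < eps * c n ->
  root (map_poly (fun a : R => a%:C) (P c d n)) z ->
  complex.Im z = 0 /\ 0 < eps * complex.Re z.
Proof.
move=> [g [g10 g11 g2 dg]] n2 e2 h1 hm hn /rootP hr.
have hc := @hc_of R c d n eps n2 h1 hm hn.
have hsq := sqr_sqrtc (z ^+ 2 + 1).
have [s0|s0] := eqVneq (sg R z) 0.
  have hz : z ^+ 2 + 1 = 0 by rewrite -hsq -/(sg R z) s0 expr0n.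
  by move: (@ev_neq0 R c d z hz n); rewrite /ev hr eqxx.
exact: (@core R c d g n z n2 g10 g11 g2 dg hr s0 eps hc e2).
Qed.

Theorem theorem2p3 (R : rcfType) (c d : nat -> R) (n : nat) :
  positive_chain_sequence d -> (2 <= n)%N ->
  ((Num.sqrt (d 2%N) < c 1%N /\
    (forall j, (2 <= j <= n.-1)%N -> Num.sqrt (d j) + Num.sqrt (d j.+1) < c j) /\
    Num.sqrt (d n) < c n) ->
   forall z : R[i], root (map_poly (fun a : R => a%:C) (P c d n)) z ->
     Im z = 0 /\ 0 < Re z) /\
  ((c 1%N < - Num.sqrt (d 2%N) /\
    (forall j, (2 <= j <= n.-1)%N -> c j < - Num.sqrt (d j) - Num.sqrt (d j.+1)) /\
    c n < - Num.sqrt (d n)) ->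
   forall z : R[i], root (map_poly (fun a : R => a%:C) (P c d n)) z ->
     Im z = 0 /\ Re z < 0).
Proof.
move=> hd n2; split.
  move=> [h1 [hm hn]] z hz.
  have [] := @main_eps R c d n 1 z hd n2 (mulr1 1) _ _ _ hz.
  - by rewrite mul1r.
  - by move=> j hj; rewrite mul1r; apply: hm.
  - by rewrite mul1r.
  rewrite mul1r ImCE ReCE => -> h; split => //.
  by rewrite ltcE /= eqxx h.
move=> [h1 [hm hn]] z hz.
have [] := @main_eps R c d n (-1) z hd n2 _ _ _ _ hz.
- by rewrite mulrNN mulr1.
- by rewrite mulN1r; lra.
- by move=> j hj; rewrite mulN1r; have := hm j hj; lra.
- by rewrite mulN1r; lra.
rewrite mulN1r oppr_gt0 ImCE ReCE => -> h; split => //.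
by rewrite ltcE /= eqxx h.
Qed.
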